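(* Let $F_1,\dots,F_n\subset\mathbb{R}^d$ be sets of $t$ points each, with elements ordered as $F_j=\{z(j)_1,\dots,z(j)_t\}$, let $k\le t$, and let $(A_1,\dots,A_k)$ be a colourful $k$-partition of them with function representation $(\sigma_1,\dots,\sigma_n)$. Then for real coefficients $\alpha_1,\dots,\alpha_n$, the point $\sum_{j=1}^n\alpha_j x^i_j$ is the same for all $i=1,\dots,k$ if and only if $\sum_{j=1}^n\alpha_j F_j(\sigma_j)=0$.
   Context: A colourful $k$-partition of colour classes $F_1,\dots,F_n$ is a family of $k$ pairwise disjoint sets $A_1,\dots,A_k$ each containing exactly one point of each $F_j$; write $A_i=\{x^i_j: x^i_j\in F_j\}$. Let $\Sigma_{k,t}$ be the set of injective maps $[k]=\{1,\dots,k\}\to[t]$. The function representation of $(A_1,\dots,A_k)$ is $(\sigma_1,\dots,\sigma_n)\in(\Sigma_{k,t})^n$ defined by $\sigma_j(i)=m$ iff $x^i_j=z(j)_m$. Let $u_1,\dots,u_k$ be the vertices of a regular simplex in $\mathbb{R}^{k-1}$ centred at the origin. For $\sigma\in\Sigma_{k,t}$ define $F_j(\sigma)=\sum_{i=1}^k u_i\otimes z(j)_{\sigma(i)}\in\mathbb{R}^{k-1}\otimes\mathbb{R}^d\cong\mathbb{R}^{(k-1)d}$, where $\otimes$ is the tensor product. *)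

(* Defs.v *)
From HB Require Import structures.
From mathcomp Require Import all_boot all_order all_algebra.
Set Implicit Arguments. Unset Strict Implicit. Unset Printing Implicit Defensive.
Import Order.TTheory GRing.Theory Num.Theory.
Local Open Scope ring_scope.

Definition sqnorm (R : pzRingType) m (v : 'rV[R]_m) : R := (v *m v^T) 0 0.

(* u_1..u_k are the vertices of a regular simplex in R^(k-1) centred at 0:
   the centroid is the origin and all pairwise distances are equal and
   positive (k equidistant points in R^(k-1) are affinely independent). *)
Definition regular_simplex_centred (R : realFieldType) (k : nat)
    (u : 'I_k -> 'rV[R]_k.-1) : Prop :=
  \sum_(i < k) u i = 0 /\
  exists2 c : R, 0 < c &
    forall i i' : 'I_k, i != i' -> sqnorm (u i - u i') = c.

(* Tensor product a (x) b in R^p (x) R^q, identified with R^(p*q)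
   via the (p x q) matrix a^T b of coordinates a_r b_s. *)
Definition tensor (R : pzRingType) p q (a : 'rV[R]_p) (b : 'rV[R]_q)
  : 'M[R]_(p, q) := a^T *m b.

(* Colourful k-partition of colour classes F_j = {z j m | m < t}:
   x i j is the point x^i_j of A_i in F_j; A_i = {x i j | j}.
   The A_i are pairwise disjoint. *)
Definition colourful_partition (R : pzRingType) (d n t k : nat)
    (z : 'I_n -> 'I_t -> 'rV[R]_d) (x : 'I_k -> 'I_n -> 'rV[R]_d) : Prop :=
  (forall i j, exists m, x i j = z j m) /\
  (forall i i', i != i' -> forall j j', x i j != x i' j').

Definition function_representation (R : pzRingType) (d n t k : nat)
    (z : 'I_n -> 'I_t -> 'rV[R]_d) (x : 'I_k -> 'I_n -> 'rV[R]_d)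
    (sigma : 'I_n -> 'I_k -> 'I_t) : Prop :=
  (forall j, injective (sigma j)) /\
  (forall i j m, sigma j i = m <-> x i j = z j m).

Definition Fsig (R : pzRingType) (d n t k : nat)
    (u : 'I_k -> 'rV[R]_k.-1) (z : 'I_n -> 'I_t -> 'rV[R]_d)
    (j : 'I_n) (s : 'I_k -> 'I_t) : 'M[R]_(k.-1, d) :=
  \sum_(i < k) tensor (u i) (z j (s i)).

(* Main.v *)
Require Import Defs.
From HB Require Import structures.
From mathcomp Require Import all_boot all_order all_algebra.
From mathcomp Require Import ring.
Import Order.TTheory GRing.Theory Num.Theory.
Set Implicit Arguments. Unset Strict Implicit.
Local Open Scope ring_scope.

Definition gd (R : realFieldType) m (a b : 'rV[R]_m) : R := (a *m b^T) 0 0.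

Lemma gdC (R : realFieldType) m (a b : 'rV[R]_m) : gd a b = gd b a.
Proof. by rewrite /gd -{1}[a *m _]trmxK mxE trmx_mul trmxK. Qed.

Lemma mxB00 (R : realFieldType) m n (A B : 'M[R]_(m,n)) i j : (A - B) i j = A i j - B i j.
Proof. by rewrite !mxE. Qed.

Lemma key (R : realFieldType) k d (u : 'I_k -> 'rV[R]_k.-1)
  (Hu : regular_simplex_centred u) (y : 'I_k -> 'rV[R]_d) :
  (forall i i', y i = y i') <-> \sum_i (u i)^T *m y i = 0.
Proof.
case: Hu => Hsum [c c0 Hc].
split.
  case: k u y Hsum Hc => [|k] u y Hsum Hc Hy; first by rewrite big_ord0.
  rewrite (eq_bigr (fun i => (u i)^T *m y ord0)); last by move=> i _; rewrite (Hy i ord0).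
  by rewrite -mulmx_suml -raddf_sum Hsum raddf0 mul0mx.
move=> HS.
have g2 i i' : 2 * gd (u i) (u i') = gd (u i) (u i) + gd (u i') (u i') - c + (if i' == i then c else 0).
  case: (eqVneq i' i) => [->|ne]; first by rewrite subrK mulr2n mulrDl mul1r.
  rewrite addr0 -(Hc i i'); last by rewrite eq_sym.
  rewrite /sqnorm raddfB /= mulmxBl !mulmxBr !mxB00 -!/(gd _ _) (gdC (u i') (u i)).
  ring.
have hs0 i : \sum_i' gd (u i) (u i') = 0.
  rewrite /gd -summxE -mulmx_sumr -raddf_sum Hsum raddf0 mulmx0 mxE //.
pose a i := gd (u i) (u i).
pose A := \sum_i a i.
have Ea i : a i *+ k = c *+ k - c - A.
  have := congr1 (fun x => 2 * x) (hs0 i).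
  rewrite mulr0 mulr_sumr (eq_bigr _ (fun i' _ => g2 i i')).
  rewrite big_split big_split big_split /= !sumr_const card_ord -big_mkcond big_pred1_eq -/A.
  move=> H; apply/eqP; rewrite -subr_eq0 -[X in _ == X]H; apply/eqP; rewrite /a mulNrn; ring.
have ha i i' : a i = a i'.
  have k0 : (k%:R : R) != 0 by rewrite pnatr_eq0 -lt0n (leq_ltn_trans _ (ltn_ord i)).
  by apply: (mulfI k0); rewrite !mulr_natl !Ea.
pose Y := \sum_i y i.
have Ey l : c *: y l = - ((2 * a l - c) *: Y).
  have := congr1 (fun M => 2 *: (u l *m M)) HS.
  rewrite mulmx0 scaler0 mulmx_sumr scaler_sumr.
  rewrite (eq_bigr (fun i => (a l + a l - c) *: y i + (if i == l then c else 0) *: y i)); last first.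
    move=> i _; rewrite mulmxA [u l *m _]mx11_scalar mul_scalar_mx scalerA -/(gd _ _) g2.
    by rewrite -[gd (u i) (u i)]/(a i) (ha i l) scalerDl.
  rewrite big_split /= -scaler_sumr [X in _ + X](bigD1 l) //= eqxx [X in _ + (_ + X)]big1; last first.
    by move=> i ne; rewrite (negbTE ne) scale0r.
  rewrite addr0 => /eqP; rewrite addrC addr_eq0 => /eqP ->.
  by rewrite mulr2n mulrDl mul1r.
move=> l m.
apply: (scalerI (lt0r_neq0 c0)).
by rewrite !Ey (ha m l).
Qed.

Theorem lemma1 (R : realFieldType) (d n t k : nat)
    (z : 'I_n -> 'I_t -> 'rV[R]_d)
    (Hz : forall j, injective (z j))
    (Hkt : (k <= t)%N)
    (x : 'I_k -> 'I_n -> 'rV[R]_d)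
    (sigma : 'I_n -> 'I_k -> 'I_t)
    (u : 'I_k -> 'rV[R]_k.-1)
    (Hu : regular_simplex_centred u)
    (Hx : colourful_partition z x)
    (Hs : function_representation z x sigma)
    (alpha : 'I_n -> R) :
  (forall i i' : 'I_k,
      \sum_(j < n) alpha j *: x i j = \sum_(j < n) alpha j *: x i' j)
  <-> \sum_(j < n) alpha j *: Fsig u z j (sigma j) = 0.
Proof.
have Hxs i j : x i j = z j (sigma j i) by apply: ((Hs.2 i j _).1).
rewrite (key Hu (fun i => \sum_(j < n) alpha j *: x i j)).
suff -> : \sum_(j < n) alpha j *: Fsig u z j (sigma j) =
          \sum_i (u i)^T *m (\sum_(j < n) alpha j *: x i j) by [].
rewrite /Fsig /tensor.
under eq_bigr => j _ do rewrite scaler_sumr.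
rewrite exchange_big /=; apply: eq_bigr => i _.
rewrite mulmx_sumr; apply: eq_bigr => j _.
by rewrite Hxs scalemxAr.
Qed.
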